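(* Let $\mathbb{F}$ be a field. (i) Let $P(\lambda)=L(\lambda)R(\lambda)$ with $L\in\mathbb{F}[\lambda]^{m\times r}$ and $R\in\mathbb{F}[\lambda]^{r\times n}$. If $L$ is column reduced or $R$ is row reduced, then $\deg(P)=\max_{1\le i\le r}\{\deg(L_{*i})+\deg(R_{i*})\}$. (ii) Let $P(\lambda)=L(\lambda)E(\lambda)R(\lambda)$ with $L\in\mathbb{F}[\lambda]^{m\times r}$, $E=(e_{ij})\in\mathbb{F}[\lambda]^{r\times s}$, $R\in\mathbb{F}[\lambda]^{s\times n}$. If $L$ is column reduced and $R$ is row reduced, then $\deg(P)=\max_{1\le i\le r,\,1\le j\le s}\{\deg(L_{*i})+\deg(e_{ij})+\deg(R_{j*})\}$.
   Context: Degree of a polynomial vector/matrix: maximum degree of its entries, $\deg0=-\infty$. $L_{*i}$: $i$th column, $R_{i*}$: $i$th row. For $N\in\mathbb{F}[\lambda]^{m\times n}$ with column degrees $d'_1,\dots,d'_n$, the highest-column-degree coefficient matrix $N_{hc}$ is the constant matrix whose $j$th column is the coefficient of $\lambda^{d'_j}$ in the $j$th column of $N$; $N$ is column reduced if $N_{hc}$ has full column rank. Analogously, with row degrees $d_i$, $M_{hr}$ has as $i$th row the coefficient of $\lambda^{d_i}$ in the $i$th row of $M$, and $M$ is row reduced if $M_{hr}$ has full row rank. *)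

(* Defs.v *)
From HB Require Import structures.
From mathcomp Require Import all_boot all_order all_algebra.
Set Implicit Arguments. Unset Strict Implicit. Unset Printing Implicit Defensive.
Import GRing.Theory.
Local Open Scope ring_scope.

(* Extended degrees: [None] stands for -infinity (the degree of 0),
   [Some d] for the natural number d. *)
Definition edeg := option nat.

Definition eadd (a b : edeg) : edeg :=
  match a, b with Some x, Some y => Some (x + y)%N | _, _ => None end.

Definition emax (a b : edeg) : edeg :=
  match a, b with
  | Some x, Some y => Some (maxn x y)
  | None, b => b
  | a, None => a
  end.

Section PolyMatDeg.
Variable F : fieldType.

Definition pdeg (p : {poly F}) : edeg :=
  if p == 0 then None else Some (size p).-1.

Definition mxdeg m n (A : 'M[{poly F}]_(m, n)) : edeg :=
  \big[emax/None]_(i < m) \big[emax/None]_(j < n) pdeg (A i j).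

Definition coldeg m n (A : 'M[{poly F}]_(m, n)) (j : 'I_n) : edeg :=
  \big[emax/None]_(i < m) pdeg (A i j).
Definition rowdeg m n (A : 'M[{poly F}]_(m, n)) (i : 'I_m) : edeg :=
  \big[emax/None]_(j < n) pdeg (A i j).

(* natural-number column/row degrees used to pick coefficients; for a zero
   column (degree -oo) any index gives the zero column, we use 0 *)
Definition coldegn m n (A : 'M[{poly F}]_(m, n)) (j : 'I_n) : nat :=
  \max_(i < m) (size (A i j)).-1.
Definition rowdegn m n (A : 'M[{poly F}]_(m, n)) (i : 'I_m) : nat :=
  \max_(j < n) (size (A i j)).-1.

Definition hc_mx m n (A : 'M[{poly F}]_(m, n)) : 'M[F]_(m, n) :=
  \matrix_(i, j) (A i j)`_(coldegn A j).
Definition hr_mx m n (A : 'M[{poly F}]_(m, n)) : 'M[F]_(m, n) :=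
  \matrix_(i, j) (A i j)`_(rowdegn A i).

Definition column_reduced m n (A : 'M[{poly F}]_(m, n)) : Prop :=
  \rank (hc_mx A) = n.
Definition row_reduced m n (A : 'M[{poly F}]_(m, n)) : Prop :=
  \rank (hr_mx A) = m.

End PolyMatDeg.

(* Main.v *)
Require Import Defs.
From mathcomp Require Import all_boot all_order all_algebra.
From mathcomp Require Import zify.
Set Implicit Arguments. Unset Strict Implicit. Unset Printing Implicit Defensive.
Import GRing.Theory.
Local Open Scope ring_scope.

Definition enc (a : edeg) : nat := if a is Some x then x.+1 else 0%N.
Lemma enc_inj : injective enc.
Proof. by case=> [x|] [y|] //= [->]. Qed.
Lemma enc_emax a b : enc (emax a b) = maxn (enc a) (enc b).
Proof. by case: a => [x|]; case: b => [y|] //=; rewrite ?maxnSS ?maxn0 ?max0n. Qed.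
Lemma enc_big (I : Type) (r : seq I) (P : pred I) (f : I -> edeg) :
  enc (\big[emax/None]_(i <- r | P i) f i) = (\max_(i <- r | P i) enc (f i))%N.
Proof. exact: (big_morph enc enc_emax). Qed.
Lemma enc_pdeg (F : fieldType) (p : {poly F}) : enc (pdeg p) = size p.
Proof.
rewrite /pdeg; case: eqP => [->|/eqP]; first by rewrite size_poly0.
by rewrite -size_poly_gt0 /= => /prednK.
Qed.
Definition esz (a b : nat) : nat := if (a == 0%N) || (b == 0%N) then 0%N else (a + b).-1.
Lemma enc_eadd a b : enc (eadd a b) = esz (enc a) (enc b).
Proof. by case: a => [x|]; case: b => [y|] //=; rewrite /esz /=; lia. Qed.
Lemma predn_max (a b : nat) : maxn a.-1 b.-1 = (maxn a b).-1.
Proof. lia. Qed.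
Lemma predn_max2 : {morph predn : x y / maxn x y >-> maxn x y}.
Proof. move=> x y; lia. Qed.
Lemma predn_bigmax (I : finType) (f : I -> nat) :
  (\max_i (f i).-1 = (\max_i f i).-1)%N.
Proof. by rewrite (big_morph predn predn_max2 (erefl 0%N : 0%N.-1 = 0%N)). Qed.

Section Core.
Variable F : fieldType.

Lemma esz_mul (p q : {poly F}) a b : (size p <= a)%N -> (size q <= b)%N ->
  (size (p * q)%R <= esz a b)%N.
Proof.
rewrite /esz; case: (a =P 0%N) => [->|_]; first by rewrite leqn0 size_poly_eq0 => /eqP->; rewrite mul0r size_poly0.
case: (b =P 0%N) => [->|_] /=; first by move=> _; rewrite leqn0 size_poly_eq0 => /eqP->; rewrite mulr0 size_poly0.
move=> hp hq; apply: leq_trans (size_polyMleq p q) _.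
by rewrite -!subn1 leq_sub2r // leq_add.
Qed.

Lemma coef_hc (p q : {poly F}) (d n : nat) : (size p <= d.+1)%N ->
  (q = 0 \/ (d + size q <= n.+1)%N) -> (p * q)`_n = p`_d * q`_(n - d).
Proof.
move=> hp [->|hq]; first by rewrite !(mulr0, coef0).
have [q0|qn0] := eqVneq q 0; first by rewrite q0 !(mulr0, coef0).
have sq : (0 < size q)%N by rewrite size_poly_gt0.

have hd : (d < n.+1)%N by lia.
rewrite coefM (bigD1 (Ordinal hd)) //= big1 ?addr0 // => j /eqP hj.
have hj' : nat_of_ord j <> d by move=> e; apply: hj; apply: val_inj.
have [lt|gt] := ltnP j d.
  rewrite [q`_ _]nth_default ?mulr0 //.
have := lt; have := hq; have := sq; move: (size q) (nat_of_ord j) => a b; lia.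
rewrite [p`_ _]nth_default ?mul0r //.
have := gt; have := hj'; have := hp; move: (size p) (nat_of_ord j) => a b; lia.
Qed.

Lemma core m r n (L : 'M[{poly F}]_(m, r)) (R : 'M[{poly F}]_(r, n)) :
  row_full (hc_mx L) ->
  (\max_(k < m) \max_(j < n) size ((L *m R) k j))%N =
  (\max_(i < r) esz (\max_(k < m) size (L k i)) (\max_(j < n) size (R i j)))%N.
Proof.
move=> /row_fullP [B hB].
pose cL i := (\max_(k < m) size (L k i))%N.
pose rR i := (\max_(j < n) size (R i j))%N.
have hcL : forall k i, (size (L k i) <= cL i)%N.
  by move=> k i; rewrite /cL; apply: (@leq_bigmax _ (fun k => size (L k i))).
have hrR : forall i j, (size (R i j) <= rR i)%N.
  by move=> i j; rewrite /rR; apply: (@leq_bigmax _ (fun j => size (R i j))).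
have cpos : forall i, (0 < cL i)%N.
  move=> i; rewrite lt0n; apply/negP => /eqP h0.
  have hcol : forall k, hc_mx L k i = 0.
    move=> k; rewrite mxE; have := hcL k i; rewrite h0 leqn0 size_poly_eq0.
    by move=> /eqP ->; rewrite coef0.
  have := congr1 (fun M : 'M[F]_r => M i i) hB; rewrite !mxE eqxx /= big1.
    by move=> /esym/eqP; rewrite oner_eq0.
  by move=> k _; rewrite hcol mulr0.
have dE : forall i, coldegn L i = (cL i).-1.
  by move=> i; rewrite /coldegn predn_bigmax.
apply/eqP; rewrite eqn_leq; apply/andP; split.
  apply/bigmax_leqP => k _; apply/bigmax_leqP => j _; rewrite mxE.
  apply: leq_trans (size_sum _ _ _) _; apply/bigmax_leqP => i _.
  apply: leq_trans _ (@leq_bigmax _ (fun i => esz (cL i) (rR i)) i).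
  exact: esz_mul.
set N := (\max_(i < r) esz (cL i) (rR i))%N.
have [->|Npos] := posnP N; first done.
case: (pickP (@predT 'I_r)) => [i1 _|hnone]; last by rewrite /N big_pred0 in Npos.
have hcard : (0 < #|'I_r|)%N by apply/card_gt0P; exists i1.
have [i0 hi0] := eq_bigmax (fun i => esz (cL i) (rR i)) hcard.
rewrite -/N in hi0.
have rpos : (0 < rR i0)%N.
  by rewrite lt0n; apply/negP => /eqP h; move: Npos; rewrite hi0 /esz h orbT.
have NE : N = (cL i0 + rR i0).-1.
  by rewrite hi0 /esz (negbTE (lt0n_neq0 (cpos i0))) (negbTE (lt0n_neq0 rpos)).
case: (pickP (@predT 'I_n)) => [j1 _|hnone]; last by rewrite /rR big_pred0 in rpos.
have hcardn : (0 < #|'I_n|)%N by apply/card_gt0P; exists j1.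
have [j0 hj0] := eq_bigmax (fun j => size (R i0 j)) hcardn.
rewrite -/(rR i0) in hj0.
pose v : 'cV[F]_r := \col_i (R i j0)`_(N.-1 - coldegn L i).
have claim : forall k, ((L *m R) k j0)`_N.-1 = (hc_mx L *m v) k 0.
  move=> k; rewrite !mxE coef_sum; apply: eq_bigr => i _; rewrite !mxE.
  apply: coef_hc; first by rewrite dE prednK ?cpos ?hcL.
  have [->|Rn0] := eqVneq (R i j0) 0; [by left | right].
  have rpi : (0 < rR i)%N.
    by apply: leq_trans (hrR i j0); rewrite size_poly_gt0.
  have : (esz (cL i) (rR i) <= N)%N by apply: (@leq_bigmax _ (fun i => esz (cL i) (rR i)) i).
  rewrite /esz (negbTE (lt0n_neq0 (cpos i))) (negbTE (lt0n_neq0 rpi)) /= dE prednK //.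
  have := hrR i j0; have := cpos i; move: (size (R i j0)) (cL i) (rR i) => a b c.
  lia.
have v0 : v i0 0 != 0.
  rewrite mxE dE NE hj0.
  have -> : ((cL i0 + size (R i0 j0)).-1.-1 - (cL i0).-1 = (size (R i0 j0)).-1)%N.
    have := cpos i0; have := rpos; rewrite hj0; move: (cL i0) (size (R i0 j0)) => a b; lia.
  by rewrite -lead_coefE lead_coef_eq0 -size_poly_gt0 -hj0.
have /existsP [k hk] : [exists k, (hc_mx L *m v) k 0 != 0].
  rewrite -negb_forall; apply/negP => /forallP h.
  have hz : hc_mx L *m v = 0.
    by apply/matrixP => a b; rewrite ord1 [RHS]mxE; apply/eqP: (h a).
  have : v = 0 by rewrite -[v]mul1mx -hB -mulmxA hz mulmx0.
  by move=> hv; move: v0; rewrite hv mxE eqxx.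
rewrite -claim in hk.
have hs : (N.-1 < size ((L *m R) k j0))%N.
  by rewrite ltnNge; apply: contra hk => h; rewrite nth_default.
rewrite -(prednK Npos).
apply: leq_trans hs _.
apply: leq_trans (@leq_bigmax _ (fun k => \max_(j < n) size ((L *m R) k j)) k).
exact: (@leq_bigmax _ (fun j => size ((L *m R) k j)) j0).
Qed.

Lemma enc_mxdeg m n (A : 'M[{poly F}]_(m, n)) :
  enc (mxdeg A) = (\max_(i < m) \max_(j < n) size (A i j))%N.
Proof.
rewrite /mxdeg enc_big; apply: eq_bigr => i _; rewrite enc_big.
by apply: eq_bigr => j _; rewrite enc_pdeg.
Qed.
Lemma enc_coldeg m n (A : 'M[{poly F}]_(m, n)) j :
  enc (coldeg A j) = (\max_(i < m) size (A i j))%N.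
Proof. by rewrite /coldeg enc_big; apply: eq_bigr => i _; rewrite enc_pdeg. Qed.
Lemma enc_rowdeg m n (A : 'M[{poly F}]_(m, n)) i :
  enc (rowdeg A i) = (\max_(j < n) size (A i j))%N.
Proof. by rewrite /rowdeg enc_big; apply: eq_bigr => j _; rewrite enc_pdeg. Qed.

Lemma enc_rhs r (f g : 'I_r -> edeg) :
  enc (\big[emax/None]_(i < r) eadd (f i) (g i)) =
  (\max_(i < r) esz (enc (f i)) (enc (g i)))%N.
Proof. by rewrite enc_big; apply: eq_bigr => i _; rewrite enc_eadd. Qed.

Lemma eszC a b : esz a b = esz b a.
Proof. by rewrite /esz orbC addnC. Qed.

Lemma part1 m r n (L : 'M[{poly F}]_(m, r)) (R : 'M[{poly F}]_(r, n)) :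
  column_reduced L \/ row_reduced R ->
  mxdeg (L *m R) = \big[emax/None]_(i < r) eadd (coldeg L i) (rowdeg R i).
Proof.
move=> H; apply: enc_inj; rewrite enc_mxdeg enc_rhs.
under [in RHS]eq_bigr do rewrite enc_coldeg enc_rowdeg.
case: H => H.
  by apply: core; rewrite /row_full H.
have hf : row_full (hc_mx R^T).
  have -> : hc_mx R^T = (hr_mx R)^T.
    apply/matrixP => a b; rewrite !mxE; congr (_`_ _).
    by rewrite /coldegn /rowdegn; apply: eq_bigr => j _; rewrite mxE.
  by rewrite /row_full mxrank_tr H.
have := core L^T hf; rewrite -trmx_mul => e.
rewrite exchange_big /=.
transitivity (\max_(j < n) \max_(i < m) size (((L *m R)^T) j i))%N.
  by apply: eq_bigr => j _; apply: eq_bigr => i _; rewrite [in RHS]mxE.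
rewrite e; apply: eq_bigr => i _; rewrite eszC; congr esz.
  by apply: eq_bigr => k _; rewrite mxE.
by apply: eq_bigr => k _; rewrite mxE.
Qed.

Lemma emaxN0 a : emax a None = a. Proof. by case: a. Qed.
Lemma rowdeg_row m n (A : 'M[{poly F}]_(m, n)) i : rowdeg A i = mxdeg (row i A).
Proof. rewrite /mxdeg big_ord_recl big_ord0 emaxN0; by apply: eq_bigr => j _; rewrite !mxE. Qed.
Lemma coldeg_row m n (A : 'M[{poly F}]_(m, n)) i j : coldeg (row i A) j = pdeg (A i j).
Proof. by rewrite /coldeg big_ord_recl big_ord0 emaxN0 mxE. Qed.
Lemma eaddA a b c : eadd (eadd a b) c = eadd a (eadd b c).
Proof. by case: a => [x|]; case: b => [y|]; case: c => [z|] //=; rewrite addnA. Qed.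
Lemma eadd_bigr a s (f : 'I_s -> edeg) :
  eadd a (\big[emax/None]_(j < s) f j) = \big[emax/None]_(j < s) eadd a (f j).
Proof.
case: a => [x|]; last by rewrite /=; elim/big_rec: _ => // j x _ <-.
apply: (big_morph (eadd (Some x))) => //.
by move=> [y|] [z|] //=; rewrite addn_maxr.
Qed.
End Core.

Unset Implicit Arguments.
Theorem corollary3p17 (F : fieldType) :
  (forall (m r n : nat) (L : 'M[{poly F}]_(m, r)) (R : 'M[{poly F}]_(r, n)),
     column_reduced L \/ row_reduced R ->
     mxdeg (L *m R) =
       \big[emax/None]_(i < r) eadd (coldeg L i) (rowdeg R i))
  /\
  (forall (m r s n : nat) (L : 'M[{poly F}]_(m, r)) (E : 'M[{poly F}]_(r, s))
          (R : 'M[{poly F}]_(s, n)),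
     column_reduced L -> row_reduced R ->
     mxdeg (L *m E *m R) =
       \big[emax/None]_(i < r) \big[emax/None]_(j < s)
          eadd (eadd (coldeg L i) (pdeg (E i j))) (rowdeg R j)).
Proof.
split; first exact: part1.
move=> m r s n L E R hL hR.
rewrite -mulmxA (part1 (@or_introl _ (row_reduced (E *m R)) hL)); apply: eq_bigr => i _.
rewrite rowdeg_row row_mul (part1 (@or_intror (column_reduced (row i E)) _ hR)) eadd_bigr.
by apply: eq_bigr => j _; rewrite coldeg_row eaddA.
Qed.
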